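(* Let $r \ge s \ge 2$ be integers. Then $$\mathrm{gp_e}(P_r \,\square\, P_s) = \begin{cases} r+2, & s = 2,\\ 2r, & s = 3,\\ 2r+2s-8, & s \ge 4.\end{cases}$$
   Context: $P_n$ denotes the path on $n$ vertices. The Cartesian product $G \,\square\, H$ has vertex set $V(G)\times V(H)$, with $(g,h)$ adjacent to $(g',h')$ iff either $gg' \in E(G)$ and $h = h'$, or $g = g'$ and $hh' \in E(H)$. A set $S$ of edges of a graph $G$ is an edge general position set if no geodesic (shortest path) of $G$ contains three edges of $S$; $\mathrm{gp_e}(G)$ is the maximum cardinality of an edge general position set of $G$. *)

(* Defs.v *)
From mathcomp Require Import all_boot all_order.
Set Implicit Arguments. Unset Strict Implicit. Unset Printing Implicit Defensive.

Definition path_adj (n : nat) : rel 'I_n :=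
  fun i j => (i.+1 == j) || (j.+1 == i).

Definition cart_adj (T U : finType) (g : rel T) (h : rel U) : rel (T * U) :=
  fun x y => (g x.1 y.1 && (x.2 == y.2)) || ((x.1 == y.1) && h x.2 y.2).

Section Graph.
Variables (T : finType) (g : rel T).

Definition is_edge (E : {set T}) : Prop := exists x y, g x y /\ E = [set x; y].

Definition geodesic (x : T) (p : seq T) : Prop :=
  path g x p /\
  forall q, path g x q -> last x q = last x p -> size p <= size q.

Definition walk_edges (x : T) (p : seq T) : seq {set T} :=
  pairmap (fun a b => [set a; b]) x p.

Definition edge_gp_set (S : {set {set T}}) : Prop :=
  (forall E, E \in S -> is_edge E) /\
  forall x p, geodesic x p -> #|[set E in S | E \in walk_edges x p]| < 3.

Definition gpe_number (k : nat) : Prop :=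
  (exists S, edge_gp_set S /\ #|S| = k) /\
  (forall S, edge_gp_set S -> #|S| <= k).

End Graph.

(* Main.v *)
Require Import Defs.
From mathcomp Require Import all_boot all_order.
From mathcomp Require Import zify.
Set Implicit Arguments. Unset Strict Implicit. Unset Printing Implicit Defensive.

Definition dist (a b : nat) := (a - b) + (b - a).
Notation V r s := ((('I_r : finType) : Type) * (('I_s : finType) : Type))%type.
Definition X {r s} (v : V r s) : nat := v.1.
Definition Y {r s} (v : V r s) : nat := v.2.
Definition d {r s} (u v : V r s) := dist (X u) (X v) + dist (Y u) (Y v).
Ltac slia := simpl in *; lia.
Notation G r s := (cart_adj (@path_adj r) (@path_adj s)).

Lemma adjE r s (u v : V r s) : G r s u v = (d u v == 1).
Proof.
case: u v => [a b] [c e]; rewrite /cart_adj /path_adj /d /X /Y /dist /=.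
rewrite -!(inj_eq val_inj) /=.
apply/idP/idP => H; lia.
Qed.

Lemma vert_eq r s (u v : V r s) : X u = X v -> Y u = Y v -> u = v.
Proof. by case: u v => [a b][c e] /= H1 H2; congr pair; apply: val_inj. Qed.

Lemma d_tri r s (a b c : V r s) : d a c <= d a b + d b c.
Proof. rewrite /d /dist; lia. Qed.

Lemma d_refl r s (a : V r s) : d a a = 0.
Proof. rewrite /d /dist; lia. Qed.

Lemma walk_lb r s (x : V r s) q : path (G r s) x q -> d x (last x q) <= size q.
Proof.
elim: q x => [|y q IH] x /=; first by rewrite d_refl.
move/andP=> [hxy hp]; have := IH _ hp; move: hxy; rewrite adjE => /eqP h1.
have := d_tri x y (last y q); move=> *; simpl in *; lia.
Qed.

Definition mv n (i j : 'I_n) : 'I_n :=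
  if i < j then insubd i i.+1 else if j < i then insubd i i.-1 else i.

Lemma mvE n (i j : 'I_n) : val (mv i j) = if i < j then i.+1 else if j < i then i.-1 else i.
Proof.
rewrite /mv; case: ltnP => h1.
  by rewrite val_insubd (leq_ltn_trans h1 (ltn_ord j)).
case: ltnP => h2 //.
by rewrite val_insubd (leq_ltn_trans (leq_pred i) (ltn_ord i)).
Qed.

Lemma stair r s (u v : V r s) :
  exists q, [/\ path (G r s) u q, last u q = v & size q = d u v].
Proof.
move: {2}(d u v) (erefl (d u v)) => n; elim: n u => [|n IH] u hn.
  exists [::]; split => //=; apply: vert_eq; move: hn; rewrite /d /dist; lia.
pose w : V r s := if X u != X v then (mv u.1 v.1, u.2) else (u.1, mv u.2 v.2).
have hw : d w v = n /\ d u w = 1.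
  rewrite /w; case: eqP => /= h; rewrite /d /X /Y /= ?mvE; move: hn h;
  rewrite /d /X /Y /dist; (case: ifP => ?; [|case: ifP => ?]); simpl in *; lia.
have [q [h1 h2 h3]] := IH w (proj1 hw).
exists (w :: q); split.
- by rewrite /= h1 andbT adjE (proj2 hw).
- by [].
- by rewrite /= h3 (proj1 hw) hn.
Qed.

Lemma geo_size r s (x : V r s) p : geodesic (G r s) x p -> size p = d x (last x p).
Proof.
case=> hp hmin; have [q [hq hl hs]] := stair x (last x p).
have := hmin q hq hl; have := walk_lb hp; slia.
Qed.

Lemma walk_dist r s (x : V r s) p i j : path (G r s) x p -> i <= j <= size p ->
  d (nth x (x::p) i) (nth x (x::p) j) <= j - i.
Proof.
move=> hp; elim: j => [|j IH].
  by move=> /andP[]; rewrite leqn0 => /eqP -> _; rewrite d_refl.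
move=> /andP[hij hj]; case: (ltngtP i j.+1) hij => // [hij _|<- _]; last by rewrite d_refl.
have := IH; rewrite -ltnS hij /= ltnW //= => /(_ isT) h.
have /(pathP x) /(_ j hj) := hp; rewrite adjE => /eqP h1.
have := d_tri (nth x (x :: p) i) (nth x (x :: p) j) (nth x (x :: p) j.+1).
rewrite /= in h1 *; slia.
Qed.

Lemma geo_dist r s (x : V r s) p i j : geodesic (G r s) x p -> i <= j <= size p ->
  d (nth x (x::p) i) (nth x (x::p) j) = j - i.
Proof.
move=> hg /andP[hij hj]; have hs := geo_size hg; case: hg => hp _.
have hl : nth x (x :: p) (size p) = last x p by have := nth_last x (x :: p).
have h1 := walk_dist hp (i := 0) (j := i); have h2 := walk_dist hp (i := i) (j := j).
have h3 := walk_dist hp (i := j) (j := size p).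
have := d_tri (nth x (x :: p) 0) (nth x (x :: p) i) (nth x (x :: p) j).
have := d_tri (nth x (x :: p) 0) (nth x (x :: p) j) (nth x (x :: p) (size p)).
rewrite hl /= in h3 * => t1 t2.
have := h1; rewrite leq0n (leq_trans hij hj) => /(_ isT).
have := h2; rewrite hij hj => /(_ isT).
have := h3; rewrite hj leqnn => /(_ isT).
slia.
Qed.

Definition mono6 (a0 a1 a2 a3 a4 a5 : nat) :=
  (a0 <= a1 /\ a1 <= a2 /\ a2 <= a3 /\ a3 <= a4 /\ a4 <= a5) \/
  (a5 <= a4 /\ a4 <= a3 /\ a3 <= a2 /\ a2 <= a1 /\ a1 <= a0).

Definition chain r s (p0 p1 p2 p3 p4 p5 : V r s) :=
  [/\ mono6 (X p0) (X p1) (X p2) (X p3) (X p4) (X p5),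
      mono6 (Y p0) (Y p1) (Y p2) (Y p3) (Y p4) (Y p5),
      d p0 p1 = 1, d p2 p3 = 1 & d p4 p5 = 1].

Lemma mono1 (a0 a1 a2 a3 a4 a5 : nat) :
  dist a0 a5 = dist a0 a1 + dist a1 a2 + dist a2 a3 + dist a3 a4 + dist a4 a5 ->
  mono6 a0 a1 a2 a3 a4 a5.
Proof. rewrite /mono6 /dist; lia. Qed.

Lemma add1 (a0 a1 a2 a3 a4 a5 : nat) : mono6 a0 a1 a2 a3 a4 a5 ->
  dist a0 a5 = dist a0 a1 + dist a1 a2 + dist a2 a3 + dist a3 a4 + dist a4 a5.
Proof. rewrite /mono6 /dist; lia. Qed.

Lemma mono_add r s (p0 p1 p2 p3 p4 p5 : V r s) :
  mono6 (X p0) (X p1) (X p2) (X p3) (X p4) (X p5) ->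
  mono6 (Y p0) (Y p1) (Y p2) (Y p3) (Y p4) (Y p5) ->
  d p0 p5 = d p0 p1 + d p1 p2 + d p2 p3 + d p3 p4 + d p4 p5.
Proof. by move=> /add1 h1 /add1 h2; rewrite /d h1 h2; lia. Qed.

Lemma tri6 (a0 a1 a2 a3 a4 a5 : nat) :
  dist a0 a5 <= dist a0 a1 + dist a1 a2 + dist a2 a3 + dist a3 a4 + dist a4 a5.
Proof. rewrite /dist; lia. Qed.

Lemma add_mono r s (p0 p1 p2 p3 p4 p5 : V r s) :
  d p0 p5 = d p0 p1 + d p1 p2 + d p2 p3 + d p3 p4 + d p4 p5 ->
  mono6 (X p0) (X p1) (X p2) (X p3) (X p4) (X p5) /\
  mono6 (Y p0) (Y p1) (Y p2) (Y p3) (Y p4) (Y p5).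
Proof.
rewrite /d => h.
have := tri6 (X p0) (X p1) (X p2) (X p3) (X p4) (X p5).
have := tri6 (Y p0) (Y p1) (Y p2) (Y p3) (Y p4) (Y p5).
move=> t1 t2; split; apply: mono1; lia.
Qed.

Definition NC r s (S : {set {set V r s}}) :=
  forall p0 p1 p2 p3 p4 p5 : V r s, chain p0 p1 p2 p3 p4 p5 ->
  [set p0; p1] \in S -> [set p2; p3] \in S -> [set p4; p5] \in S -> False.

Lemma key3 r s (S : {set {set V r s}}) x p i j k :
  NC S -> geodesic (G r s) x p -> i < j -> j < k -> k < size p ->
  [set nth x (x::p) i; nth x (x::p) i.+1] \in S ->
  [set nth x (x::p) j; nth x (x::p) j.+1] \in S ->
  [set nth x (x::p) k; nth x (x::p) k.+1] \in S -> False.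
Proof.
move=> hN hg hij hjk hk h1 h2 h3.
pose v := nth x (x :: p).
have e1 := geo_dist (i := i) (j := k.+1) hg.
have e2 := geo_dist (i := i) (j := i.+1) hg.
have e3 := geo_dist (i := i.+1) (j := j) hg.
have e4 := geo_dist (i := j) (j := j.+1) hg.
have e5 := geo_dist (i := j.+1) (j := k) hg.
have e6 := geo_dist (i := k) (j := k.+1) hg.
have hc : chain (v i) (v i.+1) (v j) (v j.+1) (v k) (v k.+1).
  have [m1 m2] : mono6 (X (v i)) (X (v i.+1)) (X (v j)) (X (v j.+1)) (X (v k)) (X (v k.+1)) /\
    mono6 (Y (v i)) (Y (v i.+1)) (Y (v j)) (Y (v j.+1)) (Y (v k)) (Y (v k.+1)).
    apply: add_mono.
    rewrite e1 ?e2 ?e3 ?e4 ?e5 ?e6; try (apply/andP; split); lia.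
  split => //; [rewrite e2 | rewrite e4 | rewrite e6]; try (apply/andP; split); lia.
exact: (hN _ _ _ _ _ _ hc h1 h2 h3).
Qed.

Lemma NC_gp r s (S : {set {set V r s}}) :
  (forall E, E \in S -> is_edge (G r s) E) -> NC S -> edge_gp_set (G r s) S.
Proof.
move=> hE hN; split => // x p hg; rewrite ltnNge; apply/negP.
move=> /card_gt2P [E1 [E2 [E3 [[m1 m2 m3] [n12 n23 n31]]]]].
have get : forall E, E \in [set E in S | E \in walk_edges x p] ->
   exists2 i, i < size p & E = [set nth x (x::p) i; nth x (x::p) i.+1] /\ E \in S.
  move=> E; rewrite inE => /andP[hS /(nthP set0) [i hi hEi]].
  rewrite size_pairmap in hi; exists i => //; split => //.
  by rewrite -hEi /walk_edges (nth_pairmap x).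
have [i hi [e1 s1]] := get _ m1.
have [j hj [e2 s2]] := get _ m2.
have [k hk [e3 s3]] := get _ m3.
rewrite e1 in s1 n12 n31; rewrite e2 in s2 n12 n23; rewrite e3 in s3 n23 n31.
have K := key3 hN hg.
case: (ltngtP i j) => hij; last by move: n12; rewrite hij eqxx.
- case: (ltngtP j k) => hjk; last by move: n23; rewrite hjk eqxx.
  + exact: (K i j k).
  + case: (ltngtP i k) => hik; last by move: n31; rewrite hik eqxx.
    * exact: (K i k j).
    * exact: (K k i j).
- case: (ltngtP j k) => hjk; last by move: n23; rewrite hjk eqxx.
  + case: (ltngtP i k) => hik; last by move: n31; rewrite hik eqxx.
    * exact: (K j i k).
    * exact: (K j k i).
  + exact: (K k j i).
Qed.

Lemma chain_neq r s (p0 p1 p2 p3 p4 p5 : V r s) : chain p0 p1 p2 p3 p4 p5 ->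
  [/\ [set p0; p1] != [set p2; p3], [set p2; p3] != [set p4; p5] &
      [set p4; p5] != [set p0; p1]].
Proof.
case=> m1 m2 d1 d2 d3; split; apply/negP => /eqP E.
- have: p2 \in [set p0; p1] by rewrite E set21.
  have: p3 \in [set p0; p1] by rewrite E set22.
  rewrite !inE => /orP[]/eqP e3 /orP[]/eqP e2; subst;
  move: m1 m2 d1 d2 d3; rewrite /mono6 /d /dist; lia.
- have: p4 \in [set p2; p3] by rewrite E set21.
  have: p5 \in [set p2; p3] by rewrite E set22.
  rewrite !inE => /orP[]/eqP e3 /orP[]/eqP e2; subst;
  move: m1 m2 d1 d2 d3; rewrite /mono6 /d /dist; lia.
- have: p0 \in [set p4; p5] by rewrite E set21.
  have: p1 \in [set p4; p5] by rewrite E set22.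
  rewrite !inE => /orP[]/eqP e3 /orP[]/eqP e2; subst;
  move: m1 m2 d1 d2 d3; rewrite /mono6 /d /dist; lia.
Qed.

Lemma pm_cons (T U : Type) (f : T -> T -> U) x y l :
  pairmap f x (y :: l) = f x y :: pairmap f y l.
Proof. by []. Qed.

Lemma gp_NC r s (S : {set {set V r s}}) : edge_gp_set (G r s) S -> NC S.
Proof.
case=> _ hgp p0 p1 p2 p3 p4 p5 hc h1 h2 h3.
have [n1 n2 n3] := chain_neq hc.
case: hc => mx my d1 d2 d3.
have [q1 [hq1 hl1 hs1]] := stair p1 p2.
have [q2 [hq2 hl2 hs2]] := stair p3 p4.
pose w := p1 :: q1 ++ p3 :: q2 ++ [:: p5].
have hw : geodesic (G r s) p0 w.
  split.
  - rewrite /w /= adjE d1 eqxx /= cat_path hq1 /= hl1 adjE d2 eqxx /=.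
    by rewrite cat_path hq2 /= hl2 adjE d3 eqxx.
  - move=> q hq hl; have := walk_lb hq; rewrite hl /w /= !last_cat /= !last_cat /=.
    rewrite size_cat /= size_cat /= hs1 hs2.
    have := mono_add mx my; move: d1 d2 d3; slia.
have := hgp _ _ hw; rewrite ltnNge => /negP; apply; apply/card_gt2P.
exists [set p0; p1], [set p2; p3], [set p4; p5]; split; last by split.
rewrite /walk_edges /w !(pm_cons, pairmap_cat) hl1 hl2 !in_set h1 h2 h3.
by rewrite !(mem_cat, inE) !eqxx !orbT.
Qed.

Lemma card_ordP n (P : nat -> bool) : #|[set x : 'I_n | P x]| = count P (iota 0 n).
Proof.
rewrite -val_enum_ord count_map cardsE cardE /enum_mem -enumT size_filter.
by rewrite (@eq_filter _ _ predT) ?filter_predT.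
Qed.

Lemma count_int n (P : nat -> bool) a b :
  (forall i, i < n -> P i = (a <= i) && (i < b)) -> a <= b -> b <= n ->
  count P (iota 0 n) = b - a.
Proof.
move=> hP hab hbn.
have -> : iota 0 n = iota 0 a ++ iota a (b - a) ++ iota b (n - b).
  have e : n = a + ((b - a) + (n - b)) by lia.
  by rewrite {1}e iotaD add0n iotaD (subnKC hab).
rewrite !count_cat.
rewrite (@eq_in_count _ _ pred0); last first.
  move=> i; rewrite mem_iota => /andP[_ hi]; rewrite hP /=; lia.
rewrite (@eq_in_count _ _ predT (iota a _)); last first.
  move=> i; rewrite mem_iota => /andP[h1 h2]; rewrite hP /=; lia.
rewrite (@eq_in_count _ _ pred0 (iota b _)); last first.
  move=> i; rewrite mem_iota => /andP[h1 h2]; rewrite hP /=; lia.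
by rewrite !count_pred0 count_predT size_iota addn0.
Qed.

Lemma card_rect r s (A B : nat -> bool) :
  #|[set v : V r s | A (X v) && B (Y v)]| = count A (iota 0 r) * count B (iota 0 s).
Proof.
have -> : [set v : V r s | A (X v) && B (Y v)] = setX [set x : 'I_r | A x] [set y : 'I_s | B y].
  by apply/setP => v; rewrite !inE.
by rewrite cardsX !card_ordP.
Qed.

Lemma X_lt r s (v : V r s) : X v < r. Proof. exact: ltn_ord. Qed.
Lemma Y_lt r s (v : V r s) : Y v < s. Proof. exact: ltn_ord. Qed.

Definition incx r s (v : V r s) : V r s := (insubd v.1 (v.1).+1, v.2).
Definition incy r s (v : V r s) : V r s := (v.1, insubd v.2 (v.2).+1).

Lemma incxE r s (v : V r s) : (X v).+1 < r -> X (incx v) = (X v).+1 /\ Y (incx v) = Y v.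
Proof. by move=> h; rewrite /X /Y /incx /= val_insubd h. Qed.
Lemma incyE r s (v : V r s) : (Y v).+1 < s -> X (incy v) = X v /\ Y (incy v) = (Y v).+1.
Proof. by move=> h; rewrite /X /Y /incy /= val_insubd h. Qed.

Definition SS r s (Hd Vd : {set V r s}) : {set {set V r s}} :=
  [set [set v; incx v] | v in Hd] :|: [set [set v; incy v] | v in Vd].

Lemma set2_eq (T : finType) (a b c e : T) : [set a; b] = [set c; e] ->
  (a = c /\ b = e) \/ (a = e /\ b = c).
Proof.
move=> E.
have: a \in [set c; e] by rewrite -E set21.
have: b \in [set c; e] by rewrite -E set22.
have: c \in [set a; b] by rewrite E set21.
have: e \in [set a; b] by rewrite E set22.
rewrite !inE => /orP[]/eqP h1 /orP[]/eqP h2 /orP[]/eqP h3 /orP[]/eqP h4; subst; tauto.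
Qed.

Lemma coordE r s (u v : V r s) : u = v -> X u = X v /\ Y u = Y v.
Proof. by move=> ->. Qed.

Lemma card_SS r s (Hd Vd : {set V r s}) :
  (forall v, v \in Hd -> (X v).+1 < r) -> (forall v, v \in Vd -> (Y v).+1 < s) ->
  #|SS Hd Vd| = #|Hd| + #|Vd|.
Proof.
move=> hH hV; rewrite /SS cardsU.
have -> : [set [set v; incx v] | v in Hd] :&: [set [set v; incy v] | v in Vd] = set0.
  apply/setP => E; rewrite !inE; apply/negP => /andP[/imsetP[u hu ->] /imsetP[v hv E2]].
  have [[e1 e2]|[e1 e2]] := set2_eq E2; move: (coordE e1) (coordE e2);
  move: (incxE (hH _ hu)) (incyE (hV _ hv)); lia.
rewrite cards0 subn0 !card_in_imset //.
- move=> u v hu hv /set2_eq [[e1 e2]|[e1 e2]] //; move: (coordE e1) (coordE e2);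
  move: (incyE (hV _ hu)) (incyE (hV _ hv)); lia.
- move=> u v hu hv /set2_eq [[e1 e2]|[e1 e2]] //; move: (coordE e1) (coordE e2);
  move: (incxE (hH _ hu)) (incxE (hH _ hv)); lia.
Qed.

Lemma SS_edge r s (Hd Vd : {set V r s}) :
  (forall v, v \in Hd -> (X v).+1 < r) -> (forall v, v \in Vd -> (Y v).+1 < s) ->
  forall E, E \in SS Hd Vd -> is_edge (G r s) E.
Proof.
move=> hH hV E; rewrite inE => /orP[]/imsetP[v hv ->]; exists v.
- exists (incx v); split => //; rewrite adjE /d /dist; move: (incxE (hH _ hv)); lia.
- exists (incy v); split => //; rewrite adjE /d /dist; move: (incyE (hV _ hv)); lia.
Qed.

Lemma memSS r s (Hd Vd : {set V r s}) (p q : V r s) :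
  (forall v, v \in Hd -> (X v).+1 < r) -> (forall v, v \in Vd -> (Y v).+1 < s) ->
  [set p; q] \in SS Hd Vd ->
  (exists2 v, v \in Hd & [/\ Y p = Y q, Y v = Y p &
     (X v = X p /\ X q = (X p).+1) \/ (X v = X q /\ X p = (X q).+1)]) \/
  (exists2 v, v \in Vd & [/\ X p = X q, X v = X p &
     (Y v = Y p /\ Y q = (Y p).+1) \/ (Y v = Y q /\ Y p = (Y q).+1)]).
Proof.
move=> hH hV; rewrite inE => /orP[]/imsetP[v hv /set2_eq E].
- left; exists v => //; have := incxE (hH _ hv).
  by case: E => -[/coordE e1 /coordE e2] h; split; slia.
- right; exists v => //; have := incyE (hV _ hv).
  by case: E => -[/coordE e1 /coordE e2] h; split; slia.
Qed.

Definition edgeOK r s (hA hB vA vB : nat -> bool) (x y x' y' : nat) : Prop :=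
  (y = y' /\ ((x' = x.+1 /\ x.+1 < r /\ hA x /\ hB y) \/
              (x = x'.+1 /\ x'.+1 < r /\ hA x' /\ hB y'))) \/
  (x = x' /\ ((y' = y.+1 /\ vA x /\ y.+1 < s /\ vB y) \/
              (y = y'.+1 /\ vA x' /\ y'.+1 < s /\ vB y'))).

Ltac dest_ok := 
  repeat match goal with
  | H : edgeOK _ _ _ _ _ _ _ _ _ _ |- _ =>
      let a := fresh "a" in let b := fresh "b" in let c := fresh "c" in
      let e := fresh "e" in
      case: H => -[e [[a [b c]]|[a [b c]]]]
  | H : mono6 _ _ _ _ _ _ |- _ => case: H => H
  end.


Definition natNC r s (hA hB vA vB : nat -> bool) := 
  forall x0 x1 x2 x3 x4 x5 y0 y1 y2 y3 y4 y5 : nat,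
  x0 < r -> x1 < r -> x2 < r -> x3 < r -> x4 < r -> x5 < r ->
  y0 < s -> y1 < s -> y2 < s -> y3 < s -> y4 < s -> y5 < s ->
  mono6 x0 x1 x2 x3 x4 x5 -> mono6 y0 y1 y2 y3 y4 y5 ->
  edgeOK r s hA hB vA vB x0 y0 x1 y1 -> edgeOK r s hA hB vA vB x2 y2 x3 y3 ->
  edgeOK r s hA hB vA vB x4 y4 x5 y5 -> False.

Definition Hdef r s (hA hB : nat -> bool) : {set V r s} :=
  [set v | (((X v).+1 < r) && hA (X v)) && hB (Y v)].
Definition Vdef r s (vA vB : nat -> bool) : {set V r s} :=
  [set v | vA (X v) && (((Y v).+1 < s) && vB (Y v))].

Arguments Hdef {r s}. Arguments Vdef {r s}.

Lemma Hdef_dom r s hA hB (v : V r s) : v \in Hdef hA hB -> (X v).+1 < r.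
Proof. by rewrite inE => /andP[/andP[]]. Qed.
Lemma Vdef_dom r s vA vB (v : V r s) : v \in Vdef vA vB -> (Y v).+1 < s.
Proof. by rewrite inE => /andP[_ /andP[]]. Qed.

Lemma memOK r s hA hB vA vB (p q : V r s) :
  [set p; q] \in SS (Hdef hA hB) (Vdef vA vB) ->
  edgeOK r s hA hB vA vB (X p) (Y p) (X q) (Y q).
Proof.
move/(memSS (@Hdef_dom r s hA hB) (@Vdef_dom r s vA vB)).
case=> -[v hv [e1 e2 [[e3 e4]|[e3 e4]]]]; rewrite inE in hv.
- case/andP: hv => /andP[h1 h2] h3; left; split => //; left.
  by rewrite e3 in h1 h2; rewrite e2 in h3; repeat split.
- case/andP: hv => /andP[h1 h2] h3; left; split => //; right.
  by rewrite e3 in h1 h2; rewrite e2 e1 in h3; repeat split.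
- case/andP: hv => h1 /andP[h2 h3]; right; split => //; left.
  by rewrite e2 in h1; rewrite e3 in h2 h3; repeat split.
- case/andP: hv => h1 /andP[h2 h3]; right; split => //; right.
  by rewrite e2 e1 in h1; rewrite e3 in h2 h3; repeat split.
Qed.

Lemma constr_gp r s hA hB vA vB : natNC r s hA hB vA vB ->
  edge_gp_set (G r s) (SS (Hdef hA hB) (Vdef vA vB)).
Proof.
move=> hN; apply: NC_gp.
  exact: SS_edge (@Hdef_dom r s hA hB) (@Vdef_dom r s vA vB).
move=> p0 p1 p2 p3 p4 p5 [mx my _ _ _] /memOK e1 /memOK e2 /memOK e3.
exact: (hN _ _ _ _ _ _ _ _ _ _ _ _ (X_lt p0) (X_lt p1) (X_lt p2) (X_lt p3) (X_lt p4) (X_lt p5)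
   (Y_lt p0) (Y_lt p1) (Y_lt p2) (Y_lt p3) (Y_lt p4) (Y_lt p5) mx my e1 e2 e3).
Qed.

Lemma constr_card r s hA hB vA vB :
  #|@SS r s (Hdef hA hB) (Vdef vA vB)| =
  count (fun x => (x.+1 < r) && hA x) (iota 0 r) * count hB (iota 0 s) +
  count vA (iota 0 r) * count (fun y => (y.+1 < s) && vB y) (iota 0 s).
Proof.
rewrite card_SS; [|exact: Hdef_dom|exact: Vdef_dom].
rewrite /Hdef /Vdef -(@card_rect r s (fun x => (x.+1 < r) && hA x) hB).
by rewrite -(@card_rect r s vA (fun y => (y.+1 < s) && vB y)).
Qed.

Lemma count_two n (P : nat -> bool) a b :
  (forall i, i < n -> P i = (i == a) || (i == b)) -> a < b -> b < n ->
  count P (iota 0 n) = 2.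
Proof.
move=> hP hab hbn.
pose P1 i := (a <= i) && (i < a.+1). pose P2 i := (b <= i) && (i < b.+1).
rewrite (@eq_in_count _ _ (predU P1 P2)); last first.
  by move=> i; rewrite mem_iota => /andP[_ hi]; rewrite hP //= /P1 /P2; lia.
have := count_predUI P1 P2 (iota 0 n).
rewrite (@eq_in_count _ (predI P1 P2) pred0); last first.
  by move=> i _; rewrite /= /P1 /P2; lia.
rewrite count_pred0 addn0 => ->.
rewrite (@count_int n P1 a a.+1) // ?(@count_int n P2 b b.+1) //; lia.
Qed.

Lemma test2 r : 2 <= r -> natNC r 2 (fun x => x == 0) (fun _ => true) (fun _ => true) (fun _ => true).
Proof.
move=> hr x0 x1 x2 x3 x4 x5 y0 y1 y2 y3 y4 y5 ? ? ? ? ? ? ? ? ? ? ? ? mx my e1 e2 e3.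
dest_ok; simpl in *; lia.
Qed.

Lemma test3 r : 3 <= r -> natNC r 3 (fun _ => false) (fun _ => true) (fun _ => true) (fun _ => true).
Proof.
move=> hr x0 x1 x2 x3 x4 x5 y0 y1 y2 y3 y4 y5 ? ? ? ? ? ? ? ? ? ? ? ? mx my e1 e2 e3.
dest_ok; simpl in *; lia.
Qed.

Lemma test4 r s : 4 <= s -> s <= r ->
  natNC r s (fun x => (x == 0) || (x == r - 2)) (fun y => (0 < y) && (y < s - 1))
            (fun x => (0 < x) && (x < r - 1)) (fun y => (y == 0) || (y == s - 2)).
Proof.
move=> hs hr x0 x1 x2 x3 x4 x5 y0 y1 y2 y3 y4 y5 ? ? ? ? ? ? ? ? ? ? ? ? mx my e1 e2 e3.
dest_ok; simpl in *; lia.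
Qed.

Ltac cnt := move=> i hi /=; apply/idP/idP => ?; lia.

Lemma lower2 r : 2 <= r -> exists S, edge_gp_set (G r 2) S /\ #|S| = r + 2.
Proof.
move=> hr; eexists; split; first exact: (constr_gp (test2 hr)).
have c1 : count (fun x => (x.+1 < r) && (x == 0)) (iota 0 r) = 1.
  by rewrite (@count_int r _ 0 1) //; try cnt; lia.
have c2 : count (fun _ => true) (iota 0 2) = 2 by [].
have c3 : count (fun _ => true) (iota 0 r) = r.
  by rewrite (@count_int r _ 0 r) ?subn0 //; try cnt; lia.
have c4 : count (fun y => (y.+1 < 2) && true) (iota 0 2) = 1 by [].
by rewrite constr_card c1 c2 c3 c4; lia.
Qed.

Lemma lower3 r : 3 <= r -> exists S, edge_gp_set (G r 3) S /\ #|S| = 2 * r.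
Proof.
move=> hr; eexists; split; first exact: (constr_gp (test3 hr)).
have c1 : count (fun x => (x.+1 < r) && false) (iota 0 r) = 0.
  by rewrite (@count_int r _ 0 0) //; try cnt; lia.
have c3 : count (fun _ => true) (iota 0 r) = r.
  by rewrite (@count_int r _ 0 r) ?subn0 //; try cnt; lia.
have c4 : count (fun y => (y.+1 < 3) && true) (iota 0 3) = 2 by [].
by rewrite constr_card c1 c3 c4; lia.
Qed.

Lemma lower4 r s : 4 <= s -> s <= r ->
  exists S, edge_gp_set (G r s) S /\ #|S| = 2 * r + 2 * s - 8.
Proof.
move=> hs hr; eexists; split; first exact: (constr_gp (test4 hs hr)).
have c1 : count (fun x => (x.+1 < r) && ((x == 0) || (x == r - 2))) (iota 0 r) = 2.
  by rewrite (@count_two r _ 0 (r - 2)) //; try cnt; lia.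
have c2 : count (fun y => (0 < y) && (y < s - 1)) (iota 0 s) = s - 2.
  by rewrite (@count_int s _ 1 (s - 1)) //; try cnt; lia.
have c3 : count (fun x => (0 < x) && (x < r - 1)) (iota 0 r) = r - 2.
  by rewrite (@count_int r _ 1 (r - 1)) //; try cnt; lia.
have c4 : count (fun y => (y.+1 < s) && ((y == 0) || (y == s - 2))) (iota 0 s) = 2.
  by rewrite (@count_two s _ 0 (s - 2)) //; try cnt; lia.
by rewrite constr_card c1 c2 c3 c4; lia.
Qed.

Definition Hd r s (S : {set {set V r s}}) : {set V r s} :=
  [set v | ((X v).+1 < r) && ([set v; incx v] \in S)].
Definition Vd r s (S : {set {set V r s}}) : {set V r s} :=
  [set v | ((Y v).+1 < s) && ([set v; incy v] \in S)].

Section U.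
Context (r s : nat) (S : {set {set V r s}}) (hN : NC S).

Lemma Hd_dom v : v \in Hd S -> X (incx v) = (X v).+1 /\ Y (incx v) = Y v.
Proof. by rewrite inE => /andP[h _]; apply: incxE. Qed.
Lemma Vd_dom v : v \in Vd S -> X (incy v) = X v /\ Y (incy v) = (Y v).+1.
Proof. by rewrite inE => /andP[h _]; apply: incyE. Qed.
Lemma Hd_m v : v \in Hd S -> [set v; incx v] \in S.
Proof. by rewrite inE => /andP[]. Qed.
Lemma Hd_m' v : v \in Hd S -> [set incx v; v] \in S.
Proof. by rewrite setUC; apply: Hd_m. Qed.
Lemma Vd_m v : v \in Vd S -> [set v; incy v] \in S.
Proof. by rewrite inE => /andP[]. Qed.
Lemma Vd_m' v : v \in Vd S -> [set incy v; v] \in S.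
Proof. by rewrite setUC; apply: Vd_m. Qed.

Ltac mkch := split; rewrite /mono6 /d /dist; slia.

Lemma L1h u1 u2 u3 : u1 \in Hd S -> u2 \in Hd S -> u3 \in Hd S ->
  Y u1 = Y u2 -> Y u2 = Y u3 -> X u1 < X u2 -> X u2 < X u3 -> False.
Proof.
move=> h1 h2 h3 e1 e2 l1 l2.
apply: (hN (p0 := u1) (p1 := incx u1) (p2 := u2) (p3 := incx u2) (p4 := u3) (p5 := incx u3));
  try by [apply: Hd_m].
move: (Hd_dom h1) (Hd_dom h2) (Hd_dom h3); mkch.
Qed.

Lemma L1v u1 u2 u3 : u1 \in Vd S -> u2 \in Vd S -> u3 \in Vd S ->
  X u1 = X u2 -> X u2 = X u3 -> Y u1 < Y u2 -> Y u2 < Y u3 -> False.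
Proof.
move=> h1 h2 h3 e1 e2 l1 l2.
apply: (hN (p0 := u1) (p1 := incy u1) (p2 := u2) (p3 := incy u2) (p4 := u3) (p5 := incy u3));
  try by [apply: Vd_m].
move: (Vd_dom h1) (Vd_dom h2) (Vd_dom h3); mkch.
Qed.

Lemma L2h u1 u2 f : u1 \in Hd S -> u2 \in Hd S -> f \in Vd S ->
  Y u1 = Y u2 -> X u1 < X u2 -> (X f <= X u1) || (X u2 < X f) -> False.
Proof.
move=> h1 h2 h3 e1 l1 /orP[] l2; move: (Hd_dom h1) (Hd_dom h2) (Vd_dom h3) => d1 d2 d3.
- case: (ltnP (Y f) (Y u1)) => l3.
  + apply: (hN (p0 := f) (p1 := incy f) (p2 := u1) (p3 := incx u1) (p4 := u2) (p5 := incx u2));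
      try by [apply: Hd_m|apply: Vd_m|apply: Vd_m'|apply: Hd_m']. mkch.
  + apply: (hN (p0 := incy f) (p1 := f) (p2 := u1) (p3 := incx u1) (p4 := u2) (p5 := incx u2));
      try by [apply: Hd_m|apply: Vd_m|apply: Vd_m'|apply: Hd_m']. mkch.
- case: (ltnP (Y f) (Y u1)) => l3.
  + apply: (hN (p0 := u1) (p1 := incx u1) (p2 := u2) (p3 := incx u2) (p4 := incy f) (p5 := f));
      try by [apply: Hd_m|apply: Vd_m|apply: Vd_m'|apply: Hd_m']. mkch.
  + apply: (hN (p0 := u1) (p1 := incx u1) (p2 := u2) (p3 := incx u2) (p4 := f) (p5 := incy f));
      try by [apply: Hd_m|apply: Vd_m|apply: Vd_m'|apply: Hd_m']. mkch.
Qed.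

Lemma L2v u1 u2 f : u1 \in Vd S -> u2 \in Vd S -> f \in Hd S ->
  X u1 = X u2 -> Y u1 < Y u2 -> (Y f <= Y u1) || (Y u2 < Y f) -> False.
Proof.
move=> h1 h2 h3 e1 l1 /orP[] l2; move: (Vd_dom h1) (Vd_dom h2) (Hd_dom h3) => d1 d2 d3.
- case: (ltnP (X f) (X u1)) => l3.
  + apply: (hN (p0 := f) (p1 := incx f) (p2 := u1) (p3 := incy u1) (p4 := u2) (p5 := incy u2));
      try by [apply: Hd_m|apply: Vd_m|apply: Vd_m'|apply: Hd_m']. mkch.
  + apply: (hN (p0 := incx f) (p1 := f) (p2 := u1) (p3 := incy u1) (p4 := u2) (p5 := incy u2));
      try by [apply: Hd_m|apply: Vd_m|apply: Vd_m'|apply: Hd_m']. mkch.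
- case: (ltnP (X f) (X u1)) => l3.
  + apply: (hN (p0 := u1) (p1 := incy u1) (p2 := u2) (p3 := incy u2) (p4 := incx f) (p5 := f));
      try by [apply: Hd_m|apply: Vd_m|apply: Vd_m'|apply: Hd_m']. mkch.
  + apply: (hN (p0 := u1) (p1 := incy u1) (p2 := u2) (p3 := incy u2) (p4 := f) (p5 := incx f));
      try by [apply: Hd_m|apply: Vd_m|apply: Vd_m'|apply: Hd_m']. mkch.
Qed.

Lemma L3h u1 u2 f g : u1 \in Hd S -> u2 \in Hd S -> f \in Vd S -> g \in Hd S ->
  Y u1 = Y u2 -> X u1 < X f -> X f <= X u2 ->
  (Y u1 <= Y f /\ Y g = (Y f).+1) \/ (Y f < Y u1 /\ Y g = Y f) -> False.
Proof.
move=> h1 h2 h3 h4 e1 l1 l2 [[l3 l4]|[l3 l4]];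
move: (Hd_dom h1) (Hd_dom h2) (Vd_dom h3) (Hd_dom h4) => d1 d2 d3 d4.
- case: (ltnP (X g) (X f)) => l5.
  + apply: (hN (p0 := g) (p1 := incx g) (p2 := incy f) (p3 := f) (p4 := u2) (p5 := incx u2));
      try by [apply: Hd_m|apply: Vd_m|apply: Vd_m'|apply: Hd_m']. mkch.
  + apply: (hN (p0 := u1) (p1 := incx u1) (p2 := f) (p3 := incy f) (p4 := g) (p5 := incx g));
      try by [apply: Hd_m|apply: Vd_m|apply: Vd_m'|apply: Hd_m']. mkch.
- case: (ltnP (X g) (X f)) => l5.
  + apply: (hN (p0 := g) (p1 := incx g) (p2 := f) (p3 := incy f) (p4 := u2) (p5 := incx u2));
      try by [apply: Hd_m|apply: Vd_m|apply: Vd_m'|apply: Hd_m']. mkch.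
  + apply: (hN (p0 := u1) (p1 := incx u1) (p2 := incy f) (p3 := f) (p4 := g) (p5 := incx g));
      try by [apply: Hd_m|apply: Vd_m|apply: Vd_m'|apply: Hd_m']. mkch.
Qed.

Lemma L3v u1 u2 f g : u1 \in Vd S -> u2 \in Vd S -> f \in Hd S -> g \in Vd S ->
  X u1 = X u2 -> Y u1 < Y f -> Y f <= Y u2 ->
  (X u1 <= X f /\ X g = (X f).+1) \/ (X f < X u1 /\ X g = X f) -> False.
Proof.
move=> h1 h2 h3 h4 e1 l1 l2 [[l3 l4]|[l3 l4]];
move: (Vd_dom h1) (Vd_dom h2) (Hd_dom h3) (Vd_dom h4) => d1 d2 d3 d4.
- case: (ltnP (Y g) (Y f)) => l5.
  + apply: (hN (p0 := g) (p1 := incy g) (p2 := incx f) (p3 := f) (p4 := u2) (p5 := incy u2));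
      try by [apply: Hd_m|apply: Vd_m|apply: Vd_m'|apply: Hd_m']. mkch.
  + apply: (hN (p0 := u1) (p1 := incy u1) (p2 := f) (p3 := incx f) (p4 := g) (p5 := incy g));
      try by [apply: Hd_m|apply: Vd_m|apply: Vd_m'|apply: Hd_m']. mkch.
- case: (ltnP (Y g) (Y f)) => l5.
  + apply: (hN (p0 := g) (p1 := incy g) (p2 := f) (p3 := incx f) (p4 := u2) (p5 := incy u2));
      try by [apply: Hd_m|apply: Vd_m|apply: Vd_m'|apply: Hd_m']. mkch.
  + apply: (hN (p0 := u1) (p1 := incy u1) (p2 := incx f) (p3 := f) (p4 := g) (p5 := incy g));
      try by [apply: Hd_m|apply: Vd_m|apply: Vd_m'|apply: Hd_m']. mkch.
Qed.

End U.

Lemma three_false (T : Type) (k : T -> nat) (R : T -> Prop) a b c :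
  (forall x y z, R x -> R y -> R z -> k x < k y -> k y < k z -> False) ->
  R a -> R b -> R c -> k a <> k b -> k b <> k c -> k c <> k a -> False.
Proof.
move=> H ha hb hc n1 n2 n3.
case: (ltngtP (k a) (k b)) => h1; case: (ltngtP (k b) (k c)) => h2;
case: (ltngtP (k a) (k c)) => h3;
first [ lia | by apply: (H a b c) | by apply: (H a c b) | by apply: (H b a c)
      | by apply: (H b c a) | by apply: (H c a b) | by apply: (H c b a) ].
Qed.

Lemma order2 (T : Type) (k : T -> nat) (R : T -> Prop) a b :
  R a -> R b -> k a <> k b -> exists x y, [/\ R x, R y & k x < k y].
Proof.
move=> ha hb n; case: (ltngtP (k a) (k b)) => h; first by exists a, b.
- by exists b, a.
- by [].
Qed.

Lemma card_part (T U : finType) (A : {set T}) (f : T -> U) :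
  #|A| = \sum_(u : U) #|[set x in A | f x == u]|.
Proof.
rewrite -sum1_card (partition_big f xpredT) //=; apply: eq_bigr => u _.
by rewrite -sum1_card; apply: eq_bigl => i; rewrite !inE.
Qed.

Lemma sum_le n (f : 'I_n -> nat) m (Z : {set 'I_n}) :
  (forall i, f i <= m) -> (forall i, i \in Z -> f i = 0) ->
  \sum_i f i <= m * (n - #|Z|).
Proof.
move=> hm hZ; rewrite (bigID (fun i => i \in Z)) /=.
rewrite big1 ?add0n; last by move=> i /hZ.
have -> : n - #|Z| = #|~: Z| by have := cardsC Z; rewrite card_ord; lia.
rewrite mulnC -sum_nat_const.
rewrite [X in _ <= X](eq_bigl (fun i => i \notin Z)); last by move=> i; rewrite inE.
by apply: leq_sum => i _.
Qed.

Section W.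
Context (r s : nat) (S : {set {set V r s}}) (hN : NC S).

Definition hh (y : 'I_s) := #|[set v in Hd S | v.2 == y]|.
Definition vv (x : 'I_r) := #|[set v in Vd S | v.1 == x]|.

Lemma Hd_lt v : v \in Hd S -> (X v).+1 < r.
Proof. by rewrite inE => /andP[]. Qed.
Lemma Vd_lt v : v \in Vd S -> (Y v).+1 < s.
Proof. by rewrite inE => /andP[]. Qed.

Lemma rowP (y : 'I_s) v : v \in [set v in Hd S | v.2 == y] -> v \in Hd S /\ Y v = y.
Proof. by rewrite !inE => /andP[h /eqP <-]. Qed.
Lemma colP (x : 'I_r) v : v \in [set v in Vd S | v.1 == x] -> v \in Vd S /\ X v = x.
Proof. by rewrite !inE => /andP[h /eqP <-]. Qed.

Lemma neqX (u v : V r s) : u != v -> Y u = Y v -> X u <> X v.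
Proof. by move=> /eqP n e1 e2; apply: n; apply: vert_eq. Qed.
Lemma neqY (u v : V r s) : u != v -> X u = X v -> Y u <> Y v.
Proof. by move=> /eqP n e1 e2; apply: n; apply: vert_eq. Qed.

Lemma hh_le2 y : hh y <= 2.
Proof.
rewrite leqNgt; apply/negP => /card_gt2P [a [b [c [[/rowP ha /rowP hb /rowP hc] [nab nbc nca]]]]].
apply: (@three_false _ X (fun v => v \in Hd S /\ Y v = y) a b c) => //.
- move=> u1 u2 u3 [h1 e1] [h2 e2] [h3 e3]; apply: (L1h hN h1 h2 h3); lia.
- by apply: neqX => //; case: ha => _ ->; case: hb => _ ->.
- by apply: neqX => //; case: hc => _ ->; case: hb => _ ->.
- by apply: neqX => //; case: hc => _ ->; case: ha => _ ->.
Qed.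

Lemma vv_le2 x : vv x <= 2.
Proof.
rewrite leqNgt; apply/negP => /card_gt2P [a [b [c [[/colP ha /colP hb /colP hc] [nab nbc nca]]]]].
apply: (@three_false _ Y (fun v => v \in Vd S /\ X v = x) a b c) => //.
- move=> u1 u2 u3 [h1 e1] [h2 e2] [h3 e3]; apply: (L1v hN h1 h2 h3); lia.
- by apply: neqY => //; case: ha => _ ->; case: hb => _ ->.
- by apply: neqY => //; case: hc => _ ->; case: hb => _ ->.
- by apply: neqY => //; case: hc => _ ->; case: ha => _ ->.
Qed.

Lemma vv_le1 x : s = 2 -> vv x <= 1.
Proof.
move=> hs; rewrite leqNgt; apply/negP => /card_gt1P [a [b [/colP [ha ea] /colP [hb eb] nab]]].
have := Vd_lt ha; have := Vd_lt hb; move/eqP: nab => nab.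
move=> l1 l2; apply: nab; apply: vert_eq; lia.
Qed.

Lemma R2_col (y0 : 'I_s) : 1 < hh y0 ->
  forall x : 'I_r, (x == 0 :> nat) || (x == r.-1 :> nat) -> vv x = 0.
Proof.
move=> /card_gt1P [a [b [ha hb nab]]] x hx.
apply/eqP; apply: contraT; rewrite -lt0n => /card_gt0P [f /colP [hf ef]].
have [u1 [u2 [[h1 e1] [h2 e2] l]]] :=
  @order2 _ X (fun v => v \in Hd S /\ Y v = y0) a b (rowP ha) (rowP hb)
  (neqX nab (etrans (proj2 (rowP ha)) (esym (proj2 (rowP hb))))).
exfalso; apply: (L2h hN h1 h2 hf); first by rewrite e1 e2.
- by [].
- have := Hd_lt h2; move: hx; lia.
Qed.

Lemma C2_row (x0 : 'I_r) : 1 < vv x0 ->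
  forall y : 'I_s, (y == 0 :> nat) || (y == s.-1 :> nat) -> hh y = 0.
Proof.
move=> /card_gt1P [a [b [ha hb nab]]] y hy.
apply/eqP; apply: contraT; rewrite -lt0n => /card_gt0P [f /rowP [hf ef]].
have [u1 [u2 [[h1 e1] [h2 e2] l]]] :=
  @order2 _ Y (fun v => v \in Vd S /\ X v = x0) a b (colP ha) (colP hb)
  (neqY nab (etrans (proj2 (colP ha)) (esym (proj2 (colP hb))))).
exfalso; apply: (L2v hN h1 h2 hf); first by rewrite e1 e2.
- by [].
- have := Vd_lt h2; move: hy; lia.
Qed.

Lemma R2V (y0 : 'I_s) : 1 < hh y0 -> 0 < #|Vd S| -> exists y : 'I_s, hh y = 0.
Proof.
move=> /card_gt1P [a [b [ha hb nab]]] /card_gt0P [f hf].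
have [u1 [u2 [[h1 e1] [h2 e2] l]]] :=
  @order2 _ X (fun v => v \in Hd S /\ Y v = y0) a b (rowP ha) (rowP hb)
  (neqX nab (etrans (proj2 (rowP ha)) (esym (proj2 (rowP hb))))).
have e12 : Y u1 = Y u2 by rewrite e1 e2.
case: (leqP (X f) (X u1)) => l1.
  by exfalso; apply: (L2h hN h1 h2 hf e12 l); rewrite l1.
case: (ltnP (X u2) (X f)) => l2.
  by exfalso; apply: (L2h hN h1 h2 hf e12 l); rewrite l2 orbT.
case: (leqP (Y u1) (Y f)) => l3.
- exists (Ordinal (Vd_lt hf)); apply/eqP; apply: contraT; rewrite -lt0n.
  move=> /card_gt0P [g /rowP [hg eg]].
  by exfalso; apply: (L3h hN h1 h2 hf hg e12 l1 l2); left; split.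
- exists f.2; apply/eqP; apply: contraT; rewrite -lt0n.
  move=> /card_gt0P [g /rowP [hg eg]].
  by exfalso; apply: (L3h hN h1 h2 hf hg e12 l1 l2); right; split.
Qed.

Lemma C2H (x0 : 'I_r) : 1 < vv x0 -> 0 < #|Hd S| -> exists x : 'I_r, vv x = 0.
Proof.
move=> /card_gt1P [a [b [ha hb nab]]] /card_gt0P [f hf].
have [u1 [u2 [[h1 e1] [h2 e2] l]]] :=
  @order2 _ Y (fun v => v \in Vd S /\ X v = x0) a b (colP ha) (colP hb)
  (neqY nab (etrans (proj2 (colP ha)) (esym (proj2 (colP hb))))).
have e12 : X u1 = X u2 by rewrite e1 e2.
case: (leqP (Y f) (Y u1)) => l1.
  by exfalso; apply: (L2v hN h1 h2 hf e12 l); rewrite l1.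
case: (ltnP (Y u2) (Y f)) => l2.
  by exfalso; apply: (L2v hN h1 h2 hf e12 l); rewrite l2 orbT.
case: (leqP (X u1) (X f)) => l3.
- exists (Ordinal (Hd_lt hf)); apply/eqP; apply: contraT; rewrite -lt0n.
  move=> /card_gt0P [g /colP [hg eg]].
  by exfalso; apply: (L3v hN h1 h2 hf hg e12 l1 l2); left; split.
- exists f.1; apply/eqP; apply: contraT; rewrite -lt0n.
  move=> /card_gt0P [g /colP [hg eg]].
  by exfalso; apply: (L3v hN h1 h2 hf hg e12 l1 l2); right; split.
Qed.

End W.

Lemma S_eq r s (S : {set {set V r s}}) :
  (forall E, E \in S -> is_edge (G r s) E) -> S = SS (Hd S) (Vd S).
Proof.
move=> hS; apply/setP => E; apply/idP/idP.
- move=> hE; have [x [y [hxy eE]]] := hS E hE; rewrite adjE in hxy.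
  have : (X y = (X x).+1 /\ Y y = Y x) \/ (X x = (X y).+1 /\ Y x = Y y) \/
     (Y y = (Y x).+1 /\ X y = X x) \/ (Y x = (Y y).+1 /\ X x = X y).
    by move: hxy; rewrite /d /dist; slia.
  case=> [[e1 e2]|[[e1 e2]|[[e1 e2]|[e1 e2]]]].
  + have hx : (X x).+1 < r by have := X_lt y; lia.
    have ey : y = incx x by apply: vert_eq; have := incxE hx; lia.
    rewrite inE; apply/orP; left; apply/imsetP; exists x; last by rewrite eE ey.
    by rewrite inE hx -ey -eE hE.
  + have hy : (X y).+1 < r by have := X_lt x; lia.
    have ex : x = incx y by apply: vert_eq; have := incxE hy; lia.
    rewrite inE; apply/orP; left; apply/imsetP; exists y; last by rewrite eE ex setUC.
    by rewrite inE hy -ex setUC -eE hE.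
  + have hx : (Y x).+1 < s by have := Y_lt y; lia.
    have ey : y = incy x by apply: vert_eq; have := incyE hx; lia.
    rewrite inE; apply/orP; right; apply/imsetP; exists x; last by rewrite eE ey.
    by rewrite inE hx -ey -eE hE.
  + have hy : (Y y).+1 < s by have := Y_lt x; lia.
    have ex : x = incy y by apply: vert_eq; have := incyE hy; lia.
    rewrite inE; apply/orP; right; apply/imsetP; exists y; last by rewrite eE ex setUC.
    by rewrite inE hy -ex setUC -eE hE.
- by rewrite inE => /orP[]/imsetP[v hv ->]; move: hv; rewrite inE => /andP[].
Qed.

Lemma card_Z n : 2 <= n -> #|[set x : 'I_n | (x == 0 :> nat) || (x == n.-1 :> nat)]| = 2.
Proof.
move=> hn; rewrite (card_ordP n (fun x => (x == 0) || (x == n.-1))).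
by rewrite (@count_two n _ 0 n.-1) //; lia.
Qed.

Lemma upper r s (S : {set {set V r s}}) : 2 <= s -> s <= r -> edge_gp_set (G r s) S ->
  #|S| <= (if s == 2 then r + 2 else if s == 3 then 2 * r else 2 * r + 2 * s - 8).
Proof.
move=> hs hr hS; have hN := gp_NC hS.
rewrite (S_eq (proj1 hS)) card_SS; [|exact: Hd_lt|exact: Vd_lt].
have eH : #|Hd S| = \sum_y hh S y := card_part _ _.
have eV : #|Vd S| = \sum_x vv S x := card_part _ _.
have cZr := card_Z (leq_trans hs hr).
have cZs := card_Z hs.
set Zr := [set x : 'I_r | _] in cZr.
set Zs := [set x : 'I_s | _] in cZs.
have fH : #|Hd S| <= 2 * (s - #|@set0 'I_s|).
  by rewrite eH; apply: sum_le => [i|i]; [exact: hh_le2|rewrite inE].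
have fV : #|Vd S| <= 2 * (r - #|@set0 'I_r|).
  by rewrite eV; apply: sum_le => [i|i]; [exact: vv_le2|rewrite inE].
rewrite cards0 in fH fV.
have f2 : s = 2 -> #|Vd S| <= 1 * (r - #|@set0 'I_r|).
  by move=> e; rewrite eV; apply: sum_le => [i|i]; [exact: vv_le1|rewrite inE].
rewrite cards0 in f2.
case: (boolP [exists y, 1 < hh S y]) => [/existsP [y0 hy0]|nR2];
case: (boolP [exists x, 1 < vv S x]) => [/existsP [x0 hx0]|nC2].
- have gH : #|Hd S| <= 2 * (s - #|Zs|).
    rewrite eH; apply: sum_le => i; first exact: hh_le2.
    by rewrite inE; apply: (C2_row hN hx0).
  have gV : #|Vd S| <= 2 * (r - #|Zr|).
    rewrite eV; apply: sum_le => i; first exact: vv_le2.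
    by rewrite inE; apply: (R2_col hN hy0).
  have := vv_le1 S x0; rewrite cZr cZs in gH gV.
  case: eqP => e1; [|case: eqP => e2]; lia.
- have gV : #|Vd S| <= 1 * (r - #|Zr|).
    rewrite eV; apply: sum_le => i.
      by move: nC2; rewrite negb_exists => /forallP /(_ i); rewrite -leqNgt.
    by rewrite inE; apply: (R2_col hN hy0).
  rewrite cZr in gV.
  case: (posnP #|Vd S|) => hV0.
    rewrite hV0; case: eqP => e1; [|case: eqP => e2]; lia.
  have [y1 hy1] := R2V hN hy0 hV0.
  have gH : #|Hd S| <= 2 * (s - #|[set y1]|).
    rewrite eH; apply: sum_le => i; first exact: hh_le2.
    by rewrite inE => /eqP ->.
  rewrite cards1 in gH.
  case: eqP => e1; [|case: eqP => e2]; lia.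
- have gH : #|Hd S| <= 1 * (s - #|Zs|).
    rewrite eH; apply: sum_le => i.
      by move: nR2; rewrite negb_exists => /forallP /(_ i); rewrite -leqNgt.
    by rewrite inE; apply: (C2_row hN hx0).
  rewrite cZs in gH.
  have := vv_le1 S x0.
  case: (posnP #|Hd S|) => hH0.
    rewrite hH0; case: eqP => e1; [|case: eqP => e2]; lia.
  have [x1 hx1] := C2H hN hx0 hH0.
  have gV : #|Vd S| <= 2 * (r - #|[set x1]|).
    rewrite eV; apply: sum_le => i; first exact: vv_le2.
    by rewrite inE => /eqP ->.
  rewrite cards1 in gV.
  case: eqP => e1; [|case: eqP => e2]; lia.
- have gH : #|Hd S| <= 1 * (s - #|@set0 'I_s|).
    rewrite eH; apply: sum_le => i.
      by move: nR2; rewrite negb_exists => /forallP /(_ i); rewrite -leqNgt.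
    by rewrite inE.
  have gV : #|Vd S| <= 1 * (r - #|@set0 'I_r|).
    rewrite eV; apply: sum_le => i.
      by move: nC2; rewrite negb_exists => /forallP /(_ i); rewrite -leqNgt.
    by rewrite inE.
  rewrite cards0 in gH gV.
  case: eqP => e1; [|case: eqP => e2]; lia.
Qed.

Theorem theorem4p1 (r s : nat) (hs : 2 <= s) (hrs : s <= r) :
  gpe_number (cart_adj (@path_adj r) (@path_adj s))
    (if s == 2 then r + 2
     else if s == 3 then 2 * r
     else 2 * r + 2 * s - 8).
Proof.
split; last by move=> S hS; apply: upper.
case: eqP => e2.
  by subst s; apply: lower2.
case: eqP => e3.
  by subst s; apply: lower3.
by apply: lower4 => //; lia.
Qed.
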